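(* If $q$ is even, each of the $q-1$ $T$-sls-pencils $T\mathcal S_\theta$ arches over a distinct $T$-plane. If $q$ is odd, then each of the $\frac{q-1}{2}$ $T$-sls-pencils $T\mathcal S_\theta$ with $N(\theta)$ a nonzero square in $\mathbb{F}_q$ arches over exactly two of the $T$-planes, and the remaining $\frac{q-1}{2}$ $T$-sls-pencils arch over no $T$-plane.
   Context: Let $q$ be a prime power, $\mathbb{F}_{q^3}^*=\mathbb{F}_{q^3}\setminus\{0\}$, $N(x)=x^{q^2+q+1}$. Points of $\mathrm{PG}(2,q^3)$ have homogeneous coordinates $(x,y,z)$. Let $T=(0,0,1)$ and $m_T$ the line $[0,0,1]$. For $\theta\in\mathbb{F}_{q^3}^*$ let $\mathcal S_\theta=\{(x\theta,x^q,0):x\in\mathbb{F}_{q^3}^*\}$; $\mathcal S_{\theta_1}=\mathcal S_{\theta_2}$ iff $N(\theta_1)=N(\theta_2)$, giving $q-1$ distinct sets, and the $q-1$ pencils $T\mathcal S_\theta=\{TX:X\in\mathcal S_\theta\}$ are the $T$-sls-pencils. For $\theta\in\mathbb{F}_{q^3}^*$, the $T$-plane $\Pi_\theta=\{(r\theta^{q+1},r^q,r^{q^2}\theta):r\in\mathbb{F}_{q^3}^*\}$ is a subplane of order $q$; $\Pi_\theta=\Pi_\kappa$ iff $N(\theta)=N(\kappa)$, so there are $q-1$ distinct $T$-planes. A $T$-sls-pencil arches over a $T$-plane if each of the $q^2+q+1$ lines of the pencil contains a unique point of the $T$-plane. *)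

(* Defs.v *)
From HB Require Import structures.
From mathcomp Require Import all_boot all_order all_algebra all_field.
Set Implicit Arguments. Unset Strict Implicit. Unset Printing Implicit Defensive.
Import GRing.Theory.
Local Open Scope ring_scope.

Section PG.
Variables (F : finFieldType) (q : nat).

(* Homogeneous coordinates (x,y,z) of PG(2, q^3) as triples over F = F_{q^3}. *)
Definition vec3 := (F * F * F)%type.
Definition mk3 (x y z : F) : vec3 := (x, y, z).
Definition scale3 (c : F) (u : vec3) : vec3 :=
  let: (x, y, z) := u in (c * x, c * y, c * z).
Definition add3 (u v : vec3) : vec3 :=
  let: (x1, y1, z1) := u in let: (x2, y2, z2) := v in (x1 + x2, y1 + y2, z1 + z2).

Definition proj_eq (u v : vec3) : Prop := exists c : F, c != 0 /\ u = scale3 c v.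

Definition on_line (P A B : vec3) : Prop :=
  exists a b : F, P = add3 (scale3 a A) (scale3 b B).

Definition Nrm (x : F) : F := x ^+ (q ^ 2 + q + 1).

Definition Tpt : vec3 := mk3 0 0 1.

Definition Spt (theta x : F) : vec3 := mk3 (x * theta) (x ^+ q) 0.

Definition inS (theta : F) (P : vec3) : Prop :=
  exists x : F, x != 0 /\ proj_eq P (Spt theta x).

Definition Ppt (th r : F) : vec3 := mk3 (r * th ^+ q.+1) (r ^+ q) (r ^+ (q ^ 2) * th).

Definition inPlane (th : F) (P : vec3) : Prop :=
  exists r : F, r != 0 /\ proj_eq P (Ppt th r).

Definition same_plane (k1 k2 : F) : Prop := forall P, inPlane k1 P <-> inPlane k2 P.

(* equality of T-sls-pencils T S_theta (determined by the point sets S_theta) *)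
Definition same_pencil (t1 t2 : F) : Prop := forall P, inS t1 P <-> inS t2 P.

(* The pencil T S_theta arches over Pi_kappa: every line T X, X in S_theta,
   contains exactly one point (projective point) of Pi_kappa. *)
Definition arches (theta kappa : F) : Prop :=
  forall x : F, x != 0 ->
    (exists r : F, r != 0 /\ on_line (Ppt kappa r) Tpt (Spt theta x)) /\
    (forall r r' : F, r != 0 -> r' != 0 ->
       on_line (Ppt kappa r) Tpt (Spt theta x) ->
       on_line (Ppt kappa r') Tpt (Spt theta x) ->
       proj_eq (Ppt kappa r) (Ppt kappa r')).

(* nonzero square in the subfield F_q = {y | y^q = y} *)
Definition sq_Fq (a : F) : Prop := exists y : F, y ^+ q = y /\ y != 0 /\ a = y ^+ 2.

End PG.

(* Main.v *)
Require Import Defs.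
From mathcomp Require Import all_boot all_order all_algebra all_field zify ring.
From mathcomp Require Import cyclic.
Set Implicit Arguments. Unset Strict Implicit. Unset Printing Implicit Defensive.
Import GRing.Theory.
Local Open Scope ring_scope.

Section Main.
Variables (F : finFieldType) (q : nat).
Hypothesis q1 : (1 < q)%N.
Hypothesis hF : #|F| = (q ^ 3)%N.

Local Notation n := (q ^ 3).-1.

Lemma n_fact : n = ((q - 1) * (q ^ 2 + q + 1))%N.
Proof. rewrite !expnS expn0; case: q q1 => // m _; nia. Qed.

Lemma n_gt0 : (0 < n)%N.
Proof. rewrite n_fact muln_gt0; apply/andP; split; lia. Qed.

Lemma frob3 (x : F) : x ^+ (q ^ 3) = x.
Proof. by rewrite -hF expf_card. Qed.

Lemma unityF (x : F) : x != 0 -> x ^+ n = 1.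
Proof.
move=> x0; have := frob3 x.
have -> : (q ^ 3 = n.+1)%N by rewrite prednK // expn_gt0; lia.
rewrite exprSr -{3}[x]mul1r; exact: (mulIf x0).
Qed.

Lemma prim_exists : exists g : F, n.-primitive_root g.
Proof.
pose rs := enum (predC1 (0 : F)).
have : has n.-primitive_root rs.
  apply: has_prim_root; first exact: n_gt0.
  - apply/allP => x; rewrite mem_enum => x0.
    by rewrite unity_rootE unityF.
  - exact: enum_uniq.
  - by rewrite -cardE cardC1 hF.
by case/hasP => g _ pg; exists g.
Qed.


Local Notation m := (q ^ 2 + q + 1)%N.

Implicit Types x y c : F.

Lemma NrmE x : Nrm q x = x ^+ m. Proof. by []. Qed.

Lemma NrmFq x : Nrm q x ^+ q = Nrm q x.
Proof.
rewrite /Nrm -exprM.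
have -> : (m * q = q ^ 3 + (q ^ 2 + q))%N by rewrite !expnS expn0; nia.
by rewrite exprD frob3 -exprS addn1.
Qed.

Lemma NrmM x y : Nrm q (x * y) = Nrm q x * Nrm q y.
Proof. by rewrite /Nrm exprMn. Qed.

Lemma NrmX x k : Nrm q (x ^+ k) = Nrm q x ^+ k.
Proof. by rewrite /Nrm exprAC. Qed.

Lemma Nrm_eq0 x : (Nrm q x == 0) = (x == 0).
Proof. by rewrite /Nrm expf_eq0 addn1. Qed.

Lemma NrmV x : Nrm q (x^-1) = (Nrm q x)^-1.
Proof. by rewrite /Nrm exprVn. Qed.

Lemma gen_exp (g : F) : n.-primitive_root g -> forall y : F, y != 0 -> exists i, y = g ^+ i.
Proof.
move=> pg y y0; have [i ->] := prim_rootP pg (unityF y0); by exists i.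
Qed.

Lemma prim_neq0 (g : F) : n.-primitive_root g -> g != 0.
Proof.
move=> pg; apply/eqP => g0; have := prim_expr_order pg.
by rewrite g0 expr0n; case: (n) n_gt0 => // k _ /eqP; rewrite eq_sym oner_eq0.
Qed.

Lemma root_q1 c : c != 0 -> c ^+ m = 1 -> exists s, s != 0 /\ s ^+ (q - 1) = c.
Proof.
move=> c0 cm; have [g pg] := prim_exists; have [i ci] := gen_exp pg c0.
have : (n %| i * m)%N by rewrite (prim_order_dvd pg) exprM -ci cm.
rewrite n_fact dvdn_pmul2r; last by lia.
case/dvdnP => j ij; exists (g ^+ j); split; first by rewrite expf_neq0 // prim_neq0.
by rewrite -exprM ci ij.
Qed.

Lemma Nrm_surj y : y != 0 -> y ^+ q = y -> exists k, k != 0 /\ Nrm q k = y.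
Proof.
move=> y0 yq; have [g pg] := prim_exists; have [i yi] := gen_exp pg y0.
have y1 : y ^+ (q - 1) = 1.
  apply: (mulIf y0); rewrite mul1r -exprSr.
  by have -> : (q - 1).+1 = q by lia.
have : (n %| i * (q - 1))%N by rewrite (prim_order_dvd pg) exprM -yi y1.
rewrite n_fact mulnC dvdn_pmul2r; last by lia.
case/dvdnP => j ij; exists (g ^+ j); split; first by rewrite expf_neq0 // prim_neq0.
by rewrite /Nrm -exprM yi ij.
Qed.


Lemma line_eq (th k x r : F) : on_line (Ppt q k r) (Tpt F) (Spt q th x) ->
  r * k ^+ q.+1 * x ^+ q = r ^+ q * th * x.
Proof.
case=> a [b]; rewrite /Ppt /add3 /scale3 /Tpt /Spt /mk3; case=> e1 e2 _.
rewrite !mulr0 !add0r in e1 e2; rewrite e1 e2; ring.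
Qed.

Lemma ppt_scale (k u r : F) : u ^+ q = u -> Ppt q k (u * r) = scale3 u (Ppt q k r).
Proof.
move=> uq; have uq2 : u ^+ (q ^ 2) = u by rewrite expnS expn1 exprM uq uq.
rewrite /Ppt /scale3 /mk3 !exprMn uq uq2; congr (_, _, _); ring.
Qed.

Lemma line_unique (th k x r r' : F) : th != 0 -> k != 0 -> x != 0 -> r != 0 -> r' != 0 ->
  on_line (Ppt q k r) (Tpt F) (Spt q th x) -> on_line (Ppt q k r') (Tpt F) (Spt q th x) ->
  proj_eq (Ppt q k r) (Ppt q k r').
Proof.
move=> th0 k0 x0 r0 r'0 /line_eq e /line_eq e'.
pose u := r / r'.
have u0 : u != 0 by rewrite mulf_neq0 // invr_eq0.
have rq0 : r' ^+ q != 0 by rewrite expf_neq0.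
have uq : u ^+ q = u.
  rewrite /u exprMn exprVn.
  have A0 : k ^+ q.+1 * x ^+ q != 0 by rewrite mulf_neq0 // expf_neq0.
  have B0 : th * x != 0 by rewrite mulf_neq0.
  have e1 : r ^+ q = r * (k ^+ q.+1 * x ^+ q) / (th * x).
    apply: (mulIf B0); rewrite mulfVK //; transitivity (r ^+ q * th * x); [ring | rewrite -e; ring].
  have e2 : r' ^+ q = r' * (k ^+ q.+1 * x ^+ q) / (th * x).
    apply: (mulIf B0); rewrite mulfVK //; transitivity (r' ^+ q * th * x); [ring | rewrite -e'; ring].
  by rewrite e1 e2; field; rewrite r'0 x0 th0 !expf_neq0.
rewrite /proj_eq; exists u; split => //.
have -> : r = u * r' by rewrite /u mulrVK ?unitfE.
exact: ppt_scale.
Qed.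


Lemma scale3M (a b : F) (v : vec3 F) : scale3 a (scale3 b v) = scale3 (a * b) v.
Proof. by case: v => [[x y] z]; rewrite /scale3 !mulrA. Qed.

Lemma scale31 (v : vec3 F) : scale3 (1 : F) v = v.
Proof. by case: v => [[x y] z]; rewrite /scale3 !mul1r. Qed.

Lemma qS : q = (q - 1).+1. Proof. lia. Qed.

Lemma Nrm_qp1 (k : F) : Nrm q (k ^+ q.+1) = Nrm q k ^+ 2.
Proof. by rewrite NrmX exprS NrmFq -expr2. Qed.

Lemma plane_incl (k1 k2 : F) : k1 != 0 -> k2 != 0 -> Nrm q k1 = Nrm q k2 ->
  forall P, inPlane q k1 P -> inPlane q k2 P.
Proof.
move=> k10 k20 Nk P [r [r0 [c [c0 ->]]]].
pose w := k2 / k1.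
have w0 : w != 0 by rewrite mulf_neq0 ?invr_eq0.
have k2E : k2 = w * k1 by rewrite /w mulfVK.
have Nw : Nrm q w = 1 by rewrite /w NrmM NrmV Nk mulfV // Nrm_eq0.
clearbody w.
have [s [s0 sq1]] : exists s, s != 0 /\ s ^+ (q - 1) = w ^+ q.+1.
  apply: root_q1; first by rewrite expf_neq0.
  by rewrite -NrmE NrmX Nw expr1n.
have sq : s ^+ q = s * w ^+ q.+1 by rewrite {1}qS exprS sq1.
have sqq : s ^+ (q ^ 2) = s * w ^+ q.
  rewrite expnS expn1 exprM sq exprMn sq -exprM -mulrA -exprD.
  have -> : (q.+1 + q.+1 * q = q + (q ^ 2 + q + 1))%N by rewrite expnS expn1; nia.
  by rewrite exprD -NrmE Nw mulr1.
have t0 : s * w ^+ q.+1 != 0 by rewrite mulf_neq0 // expf_neq0.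
exists (r * s); split; first by rewrite mulf_neq0.
exists (c / (s * w ^+ q.+1)); split; first by rewrite mulf_neq0 // invr_eq0.
have -> : Ppt q k2 (r * s) = scale3 (s * w ^+ q.+1) (Ppt q k1 r).
  rewrite /Ppt /scale3 /mk3 k2E !exprMn sq sqq; congr (_, _, _); rewrite ?exprS; ring.
by rewrite scale3M mulfVK.
Qed.

Lemma same_plane_of (k1 k2 : F) : k1 != 0 -> k2 != 0 -> Nrm q k1 = Nrm q k2 ->
  same_plane q k1 k2.
Proof.
by move=> k10 k20 Nk P; split; apply: plane_incl.
Qed.

Lemma not_same_plane (k1 k2 : F) : Nrm q k1 != Nrm q k2 -> ~ same_plane q k1 k2.
Proof.
move=> Nk /(_ (Ppt q k1 1)) [H _].
have : inPlane q k1 (Ppt q k1 1).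
  by exists 1; split; [exact: oner_neq0 | exists 1; split; [exact: oner_neq0 | rewrite scale31]].
case/H => r [r0 [c [c0]]]; rewrite /Ppt /scale3 /mk3; case=> _ e2 e3.
move/eqP: Nk; apply.
have e2' := congr1 (Nrm q) e2; have e3' := congr1 (Nrm q) e3.
rewrite expr1n in e2' e3'.
rewrite !NrmM !NrmX !NrmFq in e2' e3'.
have N1 : Nrm q (1 : F) = 1 by apply: expr1n.
rewrite N1 ?expr1n ?mul1r in e3'; rewrite N1 in e2'.
rewrite e3'.
have -> : (q ^ 2 = q * q)%N by rewrite expnS expn1.
by rewrite exprM !NrmFq mulrA -e2' mul1r.
Qed.


Lemma pencil_incl (t1 t2 : F) : t1 != 0 -> t2 != 0 -> Nrm q t1 = Nrm q t2 ->
  forall P, inS q t1 P -> inS q t2 P.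
Proof.
move=> t10 t20 Nt P [x [x0 [c [c0 ->]]]].
pose w := t2 / t1.
have w0 : w != 0 by rewrite mulf_neq0 ?invr_eq0.
have t2E : t2 = w * t1 by rewrite /w mulfVK.
have Nw : Nrm q w = 1 by rewrite /w NrmM NrmV Nt mulfV // Nrm_eq0.
clearbody w.
have [s [s0 sq1]] := root_q1 w0 Nw.
have sq : s ^+ q = s * w by rewrite {1}qS exprS sq1 mulrC.
exists (x * s); split; first by rewrite mulf_neq0.
exists (c / (s * w)); split; first by rewrite mulf_neq0 // invr_eq0 mulf_neq0.
have -> : Spt q t2 (x * s) = scale3 (s * w) (Spt q t1 x).
  rewrite /Spt /scale3 /mk3 t2E exprMn sq; congr (_, _, _); ring.
by rewrite scale3M mulfVK // mulf_neq0.
Qed.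

Lemma same_pencil_of (t1 t2 : F) : t1 != 0 -> t2 != 0 -> Nrm q t1 = Nrm q t2 ->
  same_pencil q t1 t2.
Proof. by move=> t10 t20 Nt P; split; apply: pencil_incl. Qed.

Lemma arches_iff (th k : F) : th != 0 -> k != 0 ->
  arches q th k <-> Nrm q th = Nrm q k ^+ 2.
Proof.
move=> th0 k0; split.
  case/(_ 1 (oner_neq0 F)) => [[r [r0 /line_eq e]] _].
  rewrite expr1n !mulr1 in e.
  have := congr1 (Nrm q) e; rewrite !NrmM Nrm_qp1 NrmX NrmFq.
  move/(mulfI _) => -> //; by rewrite Nrm_eq0.
move=> Nth x x0; split; last by move=> r r'; apply: line_unique.
pose c := k ^+ q.+1 / th.
have c0 : c != 0 by rewrite mulf_neq0 ?invr_eq0 ?expf_neq0.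
have Nc : Nrm q c = 1 by rewrite /c NrmM NrmV Nrm_qp1 Nth mulfV // expf_neq0 // Nrm_eq0.
have [s [s0 sq1]] := root_q1 c0 Nc.
have sq : s ^+ q = s * c by rewrite {1}qS exprS sq1 mulrC.
exists (x * s); split; first by rewrite mulf_neq0.
exists ((x * s) ^+ (q ^ 2) * k); exists (s ^+ q).
rewrite /Ppt /add3 /scale3 /Tpt /Spt /mk3 sq /c exprMn sq /c.
congr (_, _, _); field. all: try done.
Qed.


Lemma odd_n : odd n = ~~ odd q.
Proof.
have e : (q ^ 3 = n.+1)%N by rewrite prednK // expn_gt0; lia.
have := oddX q 3; rewrite e /= => <-; by rewrite negbK.
Qed.

Lemma sq_inj (a b : F) : ~~ odd q -> a != 0 -> b != 0 -> a ^+ 2 = b ^+ 2 -> a = b.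
Proof.
move=> qe a0 b0 ab; have [g pg] := prim_exists.
have d0 : a / b != 0 by rewrite mulf_neq0 ?invr_eq0.
have [i di] := gen_exp pg d0.
have d2 : (a / b) ^+ 2 = 1 by rewrite exprMn ab exprVn mulfV // expf_neq0.
have : (n %| 2 * i)%N by rewrite (prim_order_dvd pg) exprM -exprM mulnC exprM -di d2.
rewrite Gauss_dvdr; last by rewrite coprimen2 odd_n.
rewrite (prim_order_dvd pg) -di => /eqP d1.
by apply: (mulIf (invr_neq0 b0)); rewrite d1 mulfV.
Qed.

Lemma sqrt_ex (y : F) : ~~ odd q -> y != 0 -> exists z, z != 0 /\ z ^+ 2 = y.
Proof.
move=> qe y0; have [g pg] := prim_exists; have [i yi] := gen_exp pg y0.
have : (2 %| n.+1)%N by rewrite dvdn2 /= odd_n qe.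
case/dvdnP => h hn.
exists (g ^+ (i * h)); split; first by rewrite expf_neq0 // prim_neq0.
by rewrite -exprM -mulnA -hn mulnS exprD mulnC exprM (prim_expr_order pg) expr1n mulr1 yi.
Qed.

Lemma neq_opp (y : F) : odd q -> y != 0 -> y != - y.
Proof.
move=> qo y0; apply/eqP => yy.
have m1 : (1 : F) = -1 by apply: (mulIf y0); rewrite mul1r mulN1r.
have [g pg] := prim_exists.
have : (2 %| n)%N by rewrite dvdn2 odd_n qo.
case/dvdnP => h hn.
have h0 : (0 < h)%N by move: n_gt0; rewrite hn; case: h {hn}.
have g2 : (g ^+ h) ^+ 2 = 1 ^+ 2 by rewrite -exprM -hn (prim_expr_order pg) expr1n.
have gh : g ^+ h = 1.
  by move/eqP: g2; rewrite eqf_sqr -m1 orbb => /eqP.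
have : (n %| h)%N by rewrite (prim_order_dvd pg) gh.
move/dvdn_leq => /(_ h0); rewrite hn; lia.
Qed.


Lemma conclusion :
  (~~ odd q ->
     (forall theta : F, theta != 0 ->
        exists kappa : F, kappa != 0 /\ arches q theta kappa /\
          (forall kappa' : F, kappa' != 0 -> arches q theta kappa' ->
             same_plane q kappa kappa')) /\
     (forall theta theta' kappa : F, theta != 0 -> theta' != 0 -> kappa != 0 ->
        arches q theta kappa -> arches q theta' kappa ->
        same_pencil q theta theta'))
  /\
  (odd q ->
     (forall theta : F, theta != 0 -> sq_Fq q (Nrm q theta) ->
        exists kappa1 kappa2 : F, kappa1 != 0 /\ kappa2 != 0 /\
          ~ same_plane q kappa1 kappa2 /\
          arches q theta kappa1 /\ arches q theta kappa2 /\
          (forall kappa : F, kappa != 0 -> arches q theta kappa ->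
             same_plane q kappa kappa1 \/ same_plane q kappa kappa2)) /\
     (forall theta : F, theta != 0 -> ~ sq_Fq q (Nrm q theta) ->
        forall kappa : F, kappa != 0 -> ~ arches q theta kappa)).
Proof.
split=> qo; split.
- move=> th th0.
  have Nth0 : Nrm q th != 0 by rewrite Nrm_eq0.
  have [z [z0 zE]] := sqrt_ex qo Nth0.
  have zq : z ^+ q = z.
    apply: sq_inj => //; first by rewrite expf_neq0.
    by rewrite -exprM mulnC exprM zE NrmFq.
  have [k [k0 Nk]] := Nrm_surj z0 zq.
  exists k; split => //; split; first by rewrite arches_iff // Nk zE.
  move=> k' k'0; rewrite arches_iff // => Nk'.
  apply: same_plane_of => //; apply: sq_inj => //; rewrite ?Nrm_eq0 //.
  by rewrite -Nk' Nk zE.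
- move=> th th' k th0 th'0 k0; rewrite !arches_iff // => e1 e2.
  by apply: same_pencil_of => //; rewrite e1 e2.
- move=> th th0 [y [yq [y0 yE]]].
  have my0 : - y != 0 by rewrite oppr_eq0.
  have myq : (- y) ^+ q = - y.
    by rewrite -mulN1r exprMn yq -signr_odd qo expr1.
  have [k1 [k10 Nk1]] := Nrm_surj y0 yq.
  have [k2 [k20 Nk2]] := Nrm_surj my0 myq.
  exists k1, k2; split => //; split => //; split.
    by apply: not_same_plane; rewrite Nk1 Nk2 neq_opp.
  split; first by rewrite arches_iff // Nk1.
  split; first by rewrite arches_iff // Nk2 sqrrN.
  move=> k k0; rewrite arches_iff // yE => /eqP; rewrite eq_sym eqf_sqr.
  case/orP => /eqP e.
    by left; apply: same_plane_of => //; rewrite Nk1.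
  by right; apply: same_plane_of => //; rewrite Nk2.
- move=> th th0 nsq k k0; rewrite arches_iff // => e; apply: nsq.
  exists (Nrm q k); split; first exact: NrmFq.
  by split; rewrite ?Nrm_eq0.
Qed.

End Main.

Theorem corollary6p2 (F : finFieldType) (q : nat)
  (hq : exists p k : nat, prime p /\ (0 < k)%N /\ q = (p ^ k)%N)
  (hF : #|F| = (q ^ 3)%N) :
  (~~ odd q ->
     (forall theta : F, theta != 0 ->
        exists kappa : F, kappa != 0 /\ arches q theta kappa /\
          (forall kappa' : F, kappa' != 0 -> arches q theta kappa' ->
             same_plane q kappa kappa')) /\
     (forall theta theta' kappa : F, theta != 0 -> theta' != 0 -> kappa != 0 ->
        arches q theta kappa -> arches q theta' kappa ->
        same_pencil q theta theta'))
  /\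
  (odd q ->
     (forall theta : F, theta != 0 -> sq_Fq q (Nrm q theta) ->
        exists kappa1 kappa2 : F, kappa1 != 0 /\ kappa2 != 0 /\
          ~ same_plane q kappa1 kappa2 /\
          arches q theta kappa1 /\ arches q theta kappa2 /\
          (forall kappa : F, kappa != 0 -> arches q theta kappa ->
             same_plane q kappa kappa1 \/ same_plane q kappa kappa2)) /\
     (forall theta : F, theta != 0 -> ~ sq_Fq q (Nrm q theta) ->
        forall kappa : F, kappa != 0 -> ~ arches q theta kappa)).
Proof.
have q1 : (1 < q)%N.
  case: hq => p [k [pp [k0 ->]]].
  have p1 := prime_gt1 pp.
  case: k k0 => // k _; rewrite expnS.
  have : (0 < p ^ k)%N by rewrite expn_gt0 prime_gt0.
  nia.
exact: conclusion q1 hF.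
Qed.
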